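(* Let $\mathcal{C}$ be a class of groups which is closed under taking subgroups and finite direct products, and such that every graph product of residually $\mathcal{C}$ groups is residually $\mathcal{C}$. Then every graph product of LE-$\mathcal{C}$ groups is LE-$\mathcal{C}$.
   Context: Let $G$, $C$ be groups and $K\subseteq G$ finite. A map $\varphi\colon G\to C$ is a $K$-almost-homomorphism if $\varphi(k_1k_2)=\varphi(k_1)\varphi(k_2)$ for all $k_1,k_2\in K$ and $\varphi|_K$ is injective. A group $G$ is locally embeddable into $\mathcal{C}$ (LE-$\mathcal{C}$) if for every finite $K\subseteq G$ there exist $C\in\mathcal{C}$ and a $K$-almost-homomorphism $G\to C$. A group $G$ is residually $\mathcal{C}$ if for every non-trivial $g\in G$ there exist $C\in\mathcal{C}$ and a surjective homomorphism $\varphi\colon G\twoheadrightarrow C$ with $\varphi(g)\neq e$. Given a simplicial graph $\Gamma=(V,E)$ (no loops, no multiple edges, $V$ of arbitrary cardinality) and groups $\{G_v\}_{v\in V}$, the graph product is the quotient of the free product $\ast_{v\in V}G_v$ by the relations $g_ug_v=g_vg_u$ for all $g_u\in G_u$, $g_v\in G_v$ with $\{u,v\}\in E$. *)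

(* Defs.v *)
From Stdlib Require Import List FunctionalExtensionality.
Import ListNotations.
Set Implicit Arguments.

Record Grp := MkGrp {
  carrier :> Type;
  gmul : carrier -> carrier -> carrier;
  gone : carrier;
  ginv : carrier -> carrier;
  gmulA : forall x y z, gmul x (gmul y z) = gmul (gmul x y) z;
  gmul1l : forall x, gmul gone x = x;
  gmul1r : forall x, gmul x gone = x;
  gmulVl : forall x, gmul (ginv x) x = gone;
  gmulVr : forall x, gmul x (ginv x) = gone
}.
Arguments gmul {g}.
Arguments gone {g}.
Arguments ginv {g}.

Definition is_hom {G H : Grp} (f : G -> H) : Prop :=
  forall x y : G, f (gmul x y) = gmul (f x) (f y).

Definition GroupClass := Grp -> Prop.

(* Closed under taking subgroups: any group embedding into a member is a
   member (classes of groups are taken up to isomorphism). *)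
Definition closed_subgroups (C : GroupClass) : Prop :=
  forall (H G : Grp) (f : H -> G),
    is_hom f -> (forall x y, f x = f y -> x = y) -> C G -> C H.

Section Prod.
Variables (I : Type) (G : I -> Grp).

Definition prod_mul (x y : forall i, G i) : forall i, G i := fun i => gmul (x i) (y i).
Definition prod_one : forall i, G i := fun i => gone.
Definition prod_inv (x : forall i, G i) : forall i, G i := fun i => ginv (x i).
Lemma prod_mulA x y z : prod_mul x (prod_mul y z) = prod_mul (prod_mul x y) z.
Proof. apply functional_extensionality_dep; intro i; apply gmulA. Qed.
Lemma prod_mul1l x : prod_mul prod_one x = x.
Proof. apply functional_extensionality_dep; intro i; apply gmul1l. Qed.
Lemma prod_mul1r x : prod_mul x prod_one = x.
Proof. apply functional_extensionality_dep; intro i; apply gmul1r. Qed.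
Lemma prod_mulVl x : prod_mul (prod_inv x) x = prod_one.
Proof. apply functional_extensionality_dep; intro i; apply gmulVl. Qed.
Lemma prod_mulVr x : prod_mul x (prod_inv x) = prod_one.
Proof. apply functional_extensionality_dep; intro i; apply gmulVr. Qed.
Definition prodGrp : Grp :=
  @MkGrp (forall i, G i) prod_mul prod_one prod_inv prod_mulA prod_mul1l prod_mul1r prod_mulVl prod_mulVr.
End Prod.

Definition finite_type (I : Type) : Prop := exists l : list I, forall i, In i l.

Definition closed_finite_products (C : GroupClass) : Prop :=
  forall (I : Type) (G : I -> Grp), finite_type I -> (forall i, C (G i)) ->
    C (prodGrp G).

Definition almost_hom {G H : Grp} (K : list G) (phi : G -> H) : Prop :=
  (forall k1 k2, In k1 K -> In k2 K -> phi (gmul k1 k2) = gmul (phi k1) (phi k2))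
  /\ (forall k1 k2, In k1 K -> In k2 K -> phi k1 = phi k2 -> k1 = k2).

Definition LE (C : GroupClass) (G : Grp) : Prop :=
  forall K : list G, exists (H : Grp) (phi : G -> H), C H /\ almost_hom K phi.

Definition residually (C : GroupClass) (G : Grp) : Prop :=
  forall g : G, g <> gone ->
    exists (H : Grp) (phi : G -> H),
      C H /\ is_hom phi /\ (forall h : H, exists x, phi x = h) /\ phi g <> gone.

Definition simplicial (V : Type) (E : V -> V -> Prop) : Prop :=
  (forall u v, E u v -> E v u) /\ (forall v, ~ E v v).

(* P (with maps iota) is the graph product of (G v) over (V, E): the quotient of
   the free product by the commutation relations, characterised by its
   universal property (presentation). *)
Definition is_graph_product (V : Type) (E : V -> V -> Prop) (G : V -> Grp)
    (P : Grp) (iota : forall v, G v -> P) : Prop :=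
  (forall v, is_hom (iota v)) /\
  (forall u v (x : G u) (y : G v), E u v ->
      gmul (iota u x) (iota v y) = gmul (iota v y) (iota u x)) /\
  (forall (H : Grp) (f : forall v, G v -> H),
     (forall v, is_hom (f v)) ->
     (forall u v (x : G u) (y : G v), E u v ->
        gmul (f u x) (f v y) = gmul (f v y) (f u x)) ->
     (exists h : P -> H, is_hom h /\ forall v x, h (iota v x) = f v x) /\
     (forall h1 h2 : P -> H, is_hom h1 -> is_hom h2 ->
        (forall v x, h1 (iota v x) = f v x) ->
        (forall v x, h2 (iota v x) = f v x) ->
        forall p, h1 p = h2 p)).

Definition graph_products_preserve (Pr : GroupClass) : Prop :=
  forall (V : Type) (E : V -> V -> Prop) (G : V -> Grp) (P : Grp)
         (iota : forall v, G v -> P),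
    simplicial E -> @is_graph_product V E G P iota -> (forall v, Pr (G v)) -> Pr P.

(* Main.v *)
Require Import Defs.
From Stdlib Require Import List Relations ClassicalEpsilon ProofIrrelevance
  FunctionalExtensionality PropExtensionality Lia PeanoNat Eqdep Classical.
Import ListNotations.
Set Implicit Arguments.


Definition emi := excluded_middle_informative.
Arguments gmulA {g}. Arguments gmul1l {g}. Arguments gmul1r {g}.
Arguments gmulVl {g}. Arguments gmulVr {g}.

Section GB.
Variable G : Grp.
Lemma mul_eq1_inv (x y : G) : gmul x y = gone -> x = ginv y.
Proof.
  intro H. rewrite <- (gmul1r x). rewrite <- (gmulVr y). rewrite gmulA. rewrite H. apply gmul1l.
Qed.
Lemma inv_mul (x y : G) : ginv (gmul x y) = gmul (ginv y) (ginv x).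
Proof.
  symmetry. apply mul_eq1_inv. rewrite <- gmulA. rewrite (gmulA (ginv x)). rewrite gmulVl, gmul1l. apply gmulVl.
Qed.
Lemma inv_one : ginv (@gone G) = gone.
Proof. symmetry. apply mul_eq1_inv. apply gmul1l. Qed.
Lemma mul_cancel_l (a x y : G) : gmul a x = gmul a y -> x = y.
Proof.
  intro H. rewrite <- (gmul1l x), <- (gmul1l y), <- (gmulVl a), <- !gmulA, H. reflexivity.
Qed.
Lemma mul_inv_eq1 (x y : G) : gmul (ginv x) y = gone -> x = y.
Proof.
  intro H. apply (mul_cancel_l (ginv x)). rewrite H. apply gmulVl.
Qed.
End GB.
Arguments mul_eq1_inv {G}. Arguments inv_mul {G}. Arguments inv_one {G}.
Arguments mul_cancel_l {G}. Arguments mul_inv_eq1 {G}.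

Lemma hom_one (G H : Grp) (f : G -> H) : is_hom f -> f gone = gone.
Proof.
  intro hf. apply (mul_cancel_l (f gone)). rewrite <- hf, gmul1l, gmul1r. reflexivity.
Qed.
Lemma hom_inv (G H : Grp) (f : G -> H) : is_hom f -> forall x, f (ginv x) = ginv (f x).
Proof.
  intros hf x. apply mul_eq1_inv. rewrite <- hf, gmulVl. apply hom_one; auto.
Qed.

Section Words.
Variables (V : Type) (E : V -> V -> Prop) (G : V -> Grp).

Definition letter := {v : V & carrier (G v)}.
Definition word := list letter.
Local Notation L v x := (existT (fun v0 => carrier (G v0)) v x).

Definition eval (H : Grp) (f : forall v, G v -> H) (w : word) : H :=
  fold_right (fun a acc => gmul (f (projT1 a) (projT2 a)) acc) gone w.

Definition linv (a : letter) : letter := L (projT1 a) (ginv (projT2 a)).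
Definition winv (w : word) : word := rev (map linv w).

Lemma eval_app H f (w1 w2 : word) : eval H f (w1 ++ w2) = gmul (eval H f w1) (eval H f w2).
Proof.
  induction w1; simpl. rewrite gmul1l; auto. rewrite IHw1, gmulA; auto.
Qed.

Lemma eval_winv H f (hf : forall v, is_hom (f v)) (w : word) :
  eval H f (winv w) = ginv (eval H f w).
Proof.
  induction w as [|a w IH]; unfold winv in *; simpl.
  - symmetry; apply inv_one.
  - rewrite eval_app, IH, inv_mul. simpl. rewrite gmul1r. f_equal.
    destruct a; simpl. apply hom_inv; auto.
Qed.

Inductive step : word -> word -> Prop :=
| st_del v l : step (L v gone :: l) l
| st_merge v (g h : G v) l : step (L v g :: L v h :: l) (L v (gmul g h) :: l)
| st_swap u v (g : G u) (h : G v) l : E u v ->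
    step (L u g :: L v h :: l) (L v h :: L u g :: l)
| st_cons a l l' : step l l' -> step (a :: l) (a :: l').

Definition red := clos_refl_trans _ step.

Lemma red_cons a l l' : red l l' -> red (a :: l) (a :: l').
Proof.
  induction 1. apply rt_step; constructor; auto. apply rt_refl. eapply rt_trans; eauto.
Qed.

Lemma step_app_r l l' t : step l l' -> step (l ++ t) (l' ++ t).
Proof. induction 1; simpl; constructor; auto. Qed.

Lemma step_app_l t l l' : step l l' -> step (t ++ l) (t ++ l').
Proof. induction t; simpl; auto. intro; constructor; auto. Qed.

Definition commuting (H : Grp) (f : forall v, G v -> H) :=
  forall u v (x : G u) (y : G v), E u v -> gmul (f u x) (f v y) = gmul (f v y) (f u x).

Lemma eval_step H f (hf : forall v, is_hom (f v)) (hc : commuting H f) w w' :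
  step w w' -> eval H f w = eval H f w'.
Proof.
  induction 1; simpl.
  - rewrite hom_one; auto. apply gmul1l.
  - rewrite gmulA, <- hf. reflexivity.
  - rewrite !gmulA, hc; auto.
  - rewrite IHstep; auto.
Qed.

Lemma eval_red H f (hf : forall v, is_hom (f v)) (hc : commuting H f) w w' :
  red w w' -> eval H f w = eval H f w'.
Proof.
  induction 1; auto. eapply eval_step; eauto. congruence.
Qed.

End Words.

Arguments step {V} E {G}.
Arguments red {V} E {G}.
Arguments eval {V G H}.
Arguments winv {V G}.
Arguments linv {V G}.
Arguments commuting {V} E {G H}.


Lemma sig_eq {A} {P : A -> Prop} (a b : {x | P x}) : proj1_sig a = proj1_sig b -> a = b.
Proof. destruct a, b; simpl; intro; subst; f_equal; apply proof_irrelevance. Qed.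

Section Gen.
Variables (V : Type) (E : V -> V -> Prop) (G : V -> Grp) (P : Grp) (iota : forall v, G v -> P).
Hypothesis hGP : is_graph_product E G P iota.

Let hh : forall v, is_hom (iota v) := proj1 hGP.
Let hc : commuting E iota := proj1 (proj2 hGP).

Definition SC := {p : P | exists w : word G, eval iota w = p}.
Definition S_mul (a b : SC) : SC.
Proof.
  exists (gmul (proj1_sig a) (proj1_sig b)).
  destruct a as [a [w1 e1]], b as [b [w2 e2]]; simpl. exists (w1 ++ w2). rewrite eval_app; congruence.
Defined.
Definition S_one : SC := exist _ gone (ex_intro _ [] eq_refl).
Definition S_inv (a : SC) : SC.
Proof.
  exists (ginv (proj1_sig a)). destruct a as [a [w e]]; simpl. exists (winv w).
  rewrite eval_winv; auto. congruence.
Defined.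
Definition SGrp : Grp.
Proof.
  refine (@MkGrp SC S_mul S_one S_inv _ _ _ _ _); intros; apply sig_eq; simpl;
  auto using gmulA, gmul1l, gmul1r, gmulVl, gmulVr.
Defined.

Lemma generation (p : P) : exists w, eval iota w = p.
Proof.
  pose proof (proj2 (proj2 hGP)) as U.
  set (f := fun v (x : G v) => (exist _ (iota v x) (ex_intro _ [existT _ v x] (gmul1r _)) : SGrp)).
  assert (hf : forall v, is_hom (f v)).
  { intros v x y; apply sig_eq; simpl; apply hh. }
  assert (hcf : commuting E f).
  { intros u v x y huv; apply sig_eq; simpl; apply hc; auto. }
  destruct (U SGrp f hf hcf) as [[h [hh' hhi]] _].
  destruct (U P iota hh hc) as [_ uniq].
  assert (e : proj1_sig (h p) = p).
  { apply (uniq (fun q => proj1_sig (h q)) (fun q => q)).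
    - intros x y. rewrite hh'. reflexivity.
    - intros x y; reflexivity.
    - intros v x; rewrite hhi; reflexivity.
    - reflexivity. }
  rewrite <- e. exact (proj2_sig (h p)).
Qed.
End Gen.


Lemma inv_inv (G : Grp) (x : G) : ginv (ginv x) = x.
Proof. symmetry. apply mul_eq1_inv. apply gmulVr. Qed.

Section Constr.
Variables (V : Type) (E : V -> V -> Prop) (G : V -> Grp).
Local Notation L v x := (existT (fun v0 => carrier (G v0)) v x).

Definition conv := clos_refl_sym_trans (word G) (step E).

Lemma conv_app_r a b t : conv a b -> conv (a ++ t) (b ++ t).
Proof.
  induction 1. apply rst_step, step_app_r; auto. apply rst_refl. apply rst_sym; auto.
  eapply rst_trans; eauto.
Qed.
Lemma conv_app_l t a b : conv a b -> conv (t ++ a) (t ++ b).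
Proof.
  induction 1. apply rst_step, step_app_l; auto. apply rst_refl. apply rst_sym; auto.
  eapply rst_trans; eauto.
Qed.
Lemma conv_app a b c d : conv a b -> conv c d -> conv (a ++ c) (b ++ d).
Proof. intros; eapply rst_trans. apply conv_app_r; eauto. apply conv_app_l; auto. Qed.

Lemma conv_cancel (w : word G) : conv (w ++ winv w) [].
Proof.
  induction w as [|a w IH]; simpl. apply rst_refl.
  unfold winv; simpl. fold (winv w). rewrite app_assoc.
  eapply rst_trans. apply (conv_app_l [a]). apply conv_app_r. apply IH. simpl.
  destruct a as [v g]; unfold linv; simpl.
  eapply rst_trans. apply rst_step. apply st_merge. rewrite gmulVr.
  apply rst_step. apply st_del.
Qed.

Lemma winv_winv (w : word G) : winv (winv w) = w.
Proof.
  unfold winv. rewrite map_rev, rev_involutive, map_map.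
  rewrite <- (map_id w) at 2. apply map_ext. intros [v g]; unfold linv; simpl.
  rewrite inv_inv; auto.
Qed.

Lemma conv_cancel' (w : word G) : conv (winv w ++ w) [].
Proof. rewrite <- (winv_winv w) at 2. apply conv_cancel. Qed.

Definition QC := {S : word G -> Prop | exists w, S = conv w}.
Definition cls (w : word G) : QC := exist _ (conv w) (ex_intro _ w eq_refl).
Definition rep (S : QC) : word G := proj1_sig (constructive_indefinite_description _ (proj2_sig S)).
Lemma rep_spec S : proj1_sig S = conv (rep S).
Proof. unfold rep. destruct (constructive_indefinite_description _ _); auto. Qed.

Lemma cls_eq w1 w2 : conv w1 w2 -> cls w1 = cls w2.
Proof.
  intro h. apply sig_eq; simpl. extensionality x. apply propositional_extensionality.
  split; intro; eapply rst_trans; eauto. apply rst_sym; auto.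
Qed.
Lemma cls_rep S : cls (rep S) = S.
Proof. apply sig_eq; simpl. rewrite rep_spec; auto. Qed.
Lemma rep_cls w : conv (rep (cls w)) w.
Proof.
  assert (h := rep_spec (cls w)). change (conv w = conv (rep (cls w))) in h.
  rewrite <- h. apply rst_refl.
Qed.

Definition Q_mul (S T : QC) : QC := cls (rep S ++ rep T).
Definition Q_one : QC := cls [].
Definition Q_inv (S : QC) : QC := cls (winv (rep S)).

Lemma Q_mul_cls a b : Q_mul (cls a) (cls b) = cls (a ++ b).
Proof. unfold Q_mul. apply cls_eq. apply conv_app; apply rep_cls. Qed.

Lemma Q_ind (P : QC -> Prop) : (forall w, P (cls w)) -> forall S, P S.
Proof. intros h S. rewrite <- (cls_rep S). apply h. Qed.

Definition QGrp : Grp.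
Proof.
  refine (@MkGrp QC Q_mul Q_one Q_inv _ _ _ _ _).
  - intros x y z. revert x; apply Q_ind; intro a. revert y; apply Q_ind; intro b.
    revert z; apply Q_ind; intro c. rewrite !Q_mul_cls, app_assoc; auto.
  - apply Q_ind; intro a. unfold Q_one. rewrite Q_mul_cls; auto.
  - apply Q_ind; intro a. unfold Q_one. rewrite Q_mul_cls, app_nil_r; auto.
  - intro S. unfold Q_inv, Q_mul, Q_one. apply cls_eq.
    eapply rst_trans. apply conv_app_r. apply rep_cls. apply conv_cancel'.
  - intro S. unfold Q_inv, Q_mul, Q_one. apply cls_eq.
    eapply rst_trans. apply conv_app_l. apply rep_cls. apply conv_cancel.
Defined.

Definition iotaQ (v : V) (x : G v) : QGrp := cls [L v x].

Lemma eval_conv H f (hf : forall v, is_hom (f v)) (hc : commuting E (H:=H) f) w w' :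
  conv w w' -> eval f w = eval f w'.
Proof.
  induction 1; auto. eapply eval_step; eauto. congruence.
Qed.

Lemma QGP : is_graph_product E G QGrp iotaQ.
Proof.
  split; [|split].
  - intros v x y. simpl. unfold iotaQ. rewrite Q_mul_cls. apply cls_eq. simpl.
    apply rst_sym, rst_step, st_merge.
  - intros u v x y huv. simpl. unfold iotaQ. rewrite !Q_mul_cls. apply cls_eq. simpl.
    apply rst_step, st_swap; auto.
  - intros H f hf hc. split.
    + exists (fun S => eval f (rep S)). split.
      * intros S T. simpl. unfold Q_mul. rewrite <- eval_app.
        apply (eval_conv hf hc). apply rep_cls.
      * intros v x. unfold iotaQ. rewrite (eval_conv hf hc (rep_cls _)). simpl. apply gmul1r.
    + intros h1 h2 hh1 hh2 e1 e2. apply Q_ind. intro w. induction w as [|a w IH].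
      * change (cls []) with (@gone QGrp). rewrite !hom_one; auto.
      * assert (cls (a :: w) = gmul (iotaQ (projT1 a) (projT2 a)) (cls w)).
        { simpl. unfold iotaQ. rewrite Q_mul_cls. destruct a; reflexivity. }
        rewrite H0, hh1, hh2, e1, e2, IH. reflexivity.
Qed.
End Constr.


Fixpoint pl (H : Grp) (A : list H) (m : nat) : list H :=
  match m with
  | 0 => [gone]
  | S m => pl H A m ++ flat_map (fun a => map (gmul a) (pl H A m)) A
  end.
Arguments pl {H}.

Lemma pl_succ {H : Grp} (A : list H) m : incl (pl A m) (pl A (S m)).
Proof. intros x h; simpl; apply in_or_app; auto. Qed.
Lemma pl_mono {H : Grp} (A : list H) m m' : m <= m' -> incl (pl A m) (pl A m').
Proof.
  induction 1. apply incl_refl. eapply incl_tran; eauto. apply pl_succ.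
Qed.
Lemma pl_one {H : Grp} (A : list H) m : In gone (pl A m).
Proof. apply (pl_mono A (Nat.le_0_l m)); simpl; auto. Qed.
Lemma pl_A {H : Grp} (A : list H) a : In a A -> In a (pl A 1).
Proof.
  intro h. apply in_or_app; right. apply in_flat_map. exists a; split; auto.
  simpl. left. apply gmul1r.
Qed.
Lemma pl_mul {H : Grp} (A : list H) m m' x y : In x (pl A m) -> In y (pl A m') -> In (gmul x y) (pl A (m + m')).
Proof.
  revert x. induction m as [|m IH]; intros x hx hy; simpl in *.
  - destruct hx as [e|[]]; subst. rewrite gmul1l; auto.
  - apply in_app_or in hx as [hx|hx].
    + apply pl_succ. apply IH; auto.
    + apply in_flat_map in hx as [a [ha hb]]. apply in_map_iff in hb as [b [eb hb]]. subst x.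
      apply in_or_app; right. apply in_flat_map. exists a; split; auto.
      apply in_map_iff. exists (gmul b y); split. apply gmulA. apply IH; auto.
Qed.

Section Sim.
Variables (V : Type) (E : V -> V -> Prop) (G G' : V -> Grp) (phi : forall v, G v -> G' v).
Variables (A : forall v, list (G v)) (N : nat).
Hypothesis phi_mul : forall v x y, In x (pl (A v) N) -> In y (pl (A v) N) ->
  phi v (gmul x y) = gmul (phi v x) (phi v y).
Hypothesis phi_inj : forall v x y, In x (pl (A v) N) -> In y (pl (A v) N) -> phi v x = phi v y -> x = y.

Definition Psi (w : word G) : word G' := map (fun a => existT (fun v => carrier (G' v)) (projT1 a) (phi (projT1 a) (projT2 a))) w.

Lemma phi_one v : phi v gone = gone.
Proof.
  apply (mul_cancel_l (phi v gone)). rewrite <- phi_mul; try apply pl_one. rewrite !gmul1l, gmul1r; auto.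
Qed.

Definition okm (m : nat) (w : word G) := forall a, In a w -> In (projT2 a) (pl (A (projT1 a)) m).

Lemma okm_mono m m' w : m <= m' -> okm m w -> okm m' w.
Proof. intros h ok a ha. apply (pl_mono _ h). auto. Qed.

Lemma step_fwd m w w' : step E w w' -> okm m w -> 2 * m <= N ->
  step E (Psi w) (Psi w') /\ okm (2 * m) w' /\ length w' <= length w /\
  (length w' = length w -> okm m w').
Proof.
  intros hs; induction hs; intros ok hm; simpl.
  - split. rewrite phi_one. constructor.
    split; [|split; [simpl; lia|intro; simpl in *; lia]].
    apply (okm_mono (m:=m)); [lia|]. intros b hb; apply ok; simpl; auto.
  - assert (hg : In g (pl (A v) m)) by (apply (ok (existT _ v g)); simpl; auto).
    assert (hh : In h (pl (A v) m)) by (apply (ok (existT _ v h)); simpl; auto).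
    assert (hN : incl (pl (A v) m) (pl (A v) N)) by (apply pl_mono; lia).
    split. rewrite phi_mul; auto. constructor.
    split; [|split; [simpl; lia|intro; simpl in *; lia]].
    intros a [ea|ia].
    + subst a; simpl. eapply pl_mono; [|apply pl_mul; [exact hg|exact hh]]; lia.
    + apply (pl_mono _ (m:=m)); [lia|]. apply ok; simpl; auto.
  - split. constructor; auto. split; [|split; [simpl; lia|]].
    + apply (okm_mono (m:=m)); [lia|]. intros a ha. apply ok. simpl in *; tauto.
    + intros _ a ha. apply ok. simpl in *; tauto.
  - assert (ok' : okm m l) by (intros b hb; apply ok; simpl; auto).
    destruct (IHhs ok' hm) as [h1 [h2 [h3 h4]]].
    split. constructor; auto. split; [|split; [simpl; lia|]].
    + intros b [eb|ib]. subst b. apply (pl_mono _ (m:=m)); [lia|]. apply ok; simpl; auto. auto.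
    + intros e b [eb|ib]. subst b. apply ok; simpl; auto. apply h4; auto.
Qed.

Definition J (n : nat) (w : word G) := length w <= n /\ okm (2 ^ (n - length w)) w.

Lemma J_step n w w' : 2 ^ (S n) <= N -> step E w w' -> J n w -> J n w' /\ step E (Psi w) (Psi w').
Proof.
  intros hN hs [hl ok].
  assert (hm : 2 * 2 ^ (n - length w) <= N).
  { eapply Nat.le_trans; [|apply hN]. rewrite Nat.pow_succ_r'. apply Nat.mul_le_mono_l.
    apply Nat.pow_le_mono_r; lia. }
  destruct (step_fwd hs ok hm) as [h1 [h2 [h3 h4]]].
  split; auto. split; [lia|].
  destruct (Nat.eq_dec (length w') (length w)) as [e|ne].
  - rewrite e; auto.
  - apply (okm_mono (m := 2 * 2 ^ (n - length w))); auto.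
    rewrite <- Nat.pow_succ_r'. apply Nat.pow_le_mono_r; lia.
Qed.

Lemma sim_fwd n w w' : 2 ^ (S n) <= N -> red E w w' -> J n w -> red E (Psi w) (Psi w').
Proof.
  intros hN hr. apply clos_rt_rt1n in hr. induction hr; intro hj.
  - apply rt_refl.
  - destruct (J_step hN H hj) as [hj' hs]. apply rt_trans with (Psi y). apply rt_step; auto. apply IHhr; auto.
Qed.

Lemma step_bwd m w z : step E (Psi w) z -> okm m w -> m <= N ->
  exists w', step E w w' /\ z = Psi w'.
Proof.
  intros hs. remember (Psi w) as pw eqn:epw. revert w epw.
  induction hs; intros w0 epw ok hm.
  - destruct w0 as [|[u g] w0]; simpl in epw; try discriminate. injection epw; intros; subst.
    repeat match goal with h : existT _ _ _ = existT _ _ _ |- _ => apply inj_pair2 in h end.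
    assert (g = gone).
    { apply (phi_inj (v:=u)). apply (pl_mono _ hm). apply (ok (existT _ u g)); simpl; auto.
      apply pl_one. rewrite phi_one; auto. }
    subst g. exists w0. split; auto. constructor.
  - destruct w0 as [|[u1 g1] [|[u2 g2] w0]]; simpl in epw; try discriminate.
    injection epw; intros; subst.
    repeat match goal with h : existT _ _ _ = existT _ _ _ |- _ => apply inj_pair2 in h end.
    subst.
    exists (existT _ u1 (gmul g1 g2) :: w0). split. constructor.
    simpl. rewrite phi_mul; auto.
    apply (pl_mono _ hm). apply (ok (existT _ u1 g1)); simpl; auto.
    apply (pl_mono _ hm). apply (ok (existT _ u1 g2)); simpl; auto.
  - destruct w0 as [|[u1 g1] [|[u2 g2] w0]]; simpl in epw; try discriminate.
    injection epw; intros; subst.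
    repeat match goal with h : existT _ _ _ = existT _ _ _ |- _ => apply inj_pair2 in h end.
    subst.
    exists (existT _ u2 g2 :: existT _ u1 g1 :: w0). split. constructor; auto.
    reflexivity.
  - destruct w0 as [|b w0]; simpl in epw; try discriminate. injection epw as e1 e2.
    destruct (IHhs w0) as [w' [h1 h2]]; auto. intros c hc; apply ok; simpl; auto.
    exists (b :: w'). split. constructor; auto. simpl. rewrite e1, h2; auto.
Qed.

Lemma sim_bwd n w : 2 ^ (S n) <= N -> red E (Psi w) [] -> J n w -> red E w [].
Proof.
  intros hN hr. apply clos_rt_rt1n in hr. remember (Psi w) as pw eqn:e. remember [] as nil0 eqn:en.
  revert w e. induction hr; intros w0 e hj.
  - subst. destruct w0; simpl in e; try discriminate. apply rt_refl.
  - assert (hm : 2 ^ (n - length w0) <= N).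
    { eapply Nat.le_trans; [|apply hN]. apply Nat.pow_le_mono_r; lia. }
    subst x.
    destruct (@step_bwd (2 ^ (n - length w0)) w0 y) as [w' [h1 h2]]; auto. apply hj.
    destruct (J_step hN h1 hj) as [hj' _].
    apply rt_trans with w'. apply rt_step; auto. apply IHhr; auto.
Qed.

Lemma Psi_app w1 w2 : Psi (w1 ++ w2) = Psi w1 ++ Psi w2.
Proof. apply map_app. Qed.

Lemma Psi_winv w : (forall a, In a w -> phi (projT1 a) (ginv (projT2 a)) = ginv (phi (projT1 a) (projT2 a))) ->
  Psi (winv w) = winv (Psi w).
Proof.
  intro h. unfold Psi, winv. rewrite map_rev, !map_map. f_equal.
  apply map_ext_in. intros [v g] ha. unfold linv; simpl. pose proof (h _ ha) as hh; simpl in hh. rewrite hh. reflexivity.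
Qed.

Lemma phi_inv v g : In g (pl (A v) N) -> In (ginv g) (pl (A v) N) -> phi v (ginv g) = ginv (phi v g).
Proof.
  intros h1 h2. apply mul_eq1_inv. rewrite <- phi_mul; auto. rewrite gmulVl. apply phi_one.
Qed.
End Sim.


Section Heap.
Variables (V : Type) (E : V -> V -> Prop) (G : V -> Grp).
Hypothesis Esym : forall u v, E u v -> E v u.
Hypothesis Eirr : forall v, ~ E v v.
Local Notation L v x := (existT (fun v0 => carrier (G v0)) v x).

Definition state := forall w : V, list (option (carrier (G w))).
Definition cast {v w : V} (e : v = w) (g : G v) : G w := eq_rect v (fun z => carrier (G z)) g w e.

Definition push (v : V) (g : G v) (x : state) : state := fun w =>
  match emi (v = w) with
  | left e => Some (cast e g) :: x w
  | right _ => if emi (E v w) then x w else None :: x w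
  end.
Definition pop (v : V) (x : state) : state := fun w =>
  if emi (v = w) then tl (x w) else if emi (E v w) then x w else tl (x w).

Lemma push_v v g x : push v g x v = Some g :: x v.
Proof.
  unfold push. destruct (emi (v = v)) as [e|n]; [|congruence].
  rewrite (proof_irrelevance _ e eq_refl). reflexivity.
Qed.
Lemma push_adj v g x w : E v w -> push v g x w = x w.
Proof.
  intro h. unfold push. destruct (emi (v = w)) as [e|n].
  - subst. exfalso; eapply Eirr; eauto.
  - destruct (emi (E v w)); tauto.
Qed.
Lemma push_nadj v g x w : v <> w -> ~ E v w -> push v g x w = None :: x w.
Proof.
  intros h1 h2. unfold push. destruct (emi (v = w)); [tauto|]. destruct (emi (E v w)); tauto.
Qed.
Lemma pop_push v g x : pop v (push v g x) = x.
Proof.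
  extensionality w. unfold pop, push. destruct (emi (v = w)); simpl; auto.
  destruct (emi (E v w)); simpl; auto.
Qed.
Lemma push_comm u v (g : G u) (h : G v) x : E u v ->
  push u g (push v h x) = push v h (push u g x).
Proof.
  intro huv. assert (u <> v) by (intro; subst; eapply Eirr; eauto).
  extensionality w.
  destruct (emi (u = w)) as [e1|n1].
  - subst w. rewrite push_v. rewrite push_adj by (apply Esym; auto).
    rewrite push_adj by (apply Esym; auto). rewrite push_v. reflexivity.
  - destruct (emi (v = w)) as [e2|n2].
    + subst w. rewrite push_adj by auto. rewrite push_v. rewrite push_v.
      rewrite push_adj by auto. reflexivity.
    + destruct (classic (E u w)) as [a1|a1]; destruct (classic (E v w)) as [a2|a2].
      * rewrite !push_adj; auto.
      * rewrite (push_adj g (push v h x) a1), (push_nadj h (push u g x) n2 a2),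
          (push_adj g x a1), (push_nadj h x n2 a2). reflexivity.
      * rewrite (push_adj h (push u g x) a2), (push_nadj g (push v h x) n1 a1),
          (push_adj h x a2), (push_nadj g x n1 a1). reflexivity.
      * rewrite !push_nadj; auto.
Qed.

Definition act (v : V) (g : G v) (x : state) : state :=
  if emi (g = gone) then x else
  match x v with
  | Some k :: _ => if emi (gmul g k = gone) then pop v x else push v (gmul g k) (pop v x)
  | _ => push v g x
  end.

Lemma act_push v g k y : act v g (push v k y) =
  if emi (g = gone) then push v k y else if emi (gmul g k = gone) then y else push v (gmul g k) y.
Proof.
  unfold act. destruct (emi (g = gone)); auto. rewrite push_v.
  destruct (emi (gmul g k = gone)); rewrite pop_push; auto.
Qed.

Definition S (v : V) (c : G v) (y : state) : state := if emi (c = gone) then y else push v c y.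
Definition NT (v : V) (y : state) := forall k rest, y v <> Some k :: rest.

Lemma act_S v g c y : NT v y -> act v g (S v c y) = S v (gmul g c) y.
Proof.
  intro nt. unfold S. destruct (emi (c = gone)) as [ec|nc].
  - subst c. rewrite gmul1r. unfold act. destruct (emi (g = gone)); auto.
    destruct (y v) as [|[k|] rest] eqn:ey; auto. exfalso; eapply nt; eauto.
  - rewrite act_push. destruct (emi (g = gone)) as [eg|ng].
    + subst; rewrite gmul1l. destruct (emi (c = gone)); tauto.
    + destruct (emi (gmul g c = gone)); auto.
Qed.

Lemma S_comm u v d c z : E u v -> S u d (S v c z) = S v c (S u d z).
Proof.
  intro h. unfold S. destruct (emi (d = gone)); destruct (emi (c = gone)); auto.
  apply push_comm; auto.
Qed.

Lemma NT_S u v d z : E u v -> NT v z -> NT v (S u d z).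
Proof.
  intros h nt k rest. unfold S. destruct (emi (d = gone)); auto. rewrite push_adj; auto.
Qed.

Definition empty : state := fun _ => [].
Definition heap (s : word G) : state := fold_right (fun a x => push (projT1 a) (projT2 a) x) empty s.

Lemma heap_L s v k rest : heap s v = Some k :: rest ->
  exists s0, red E s (L v k :: s0) /\ heap s = push v k (heap s0).
Proof.
  induction s as [|[u g] s IH]; simpl; intro h.
  - discriminate.
  - destruct (emi (u = v)) as [e|n].
    + subst u. rewrite push_v in h. injection h; intros; subst. exists s; split; auto. apply rt_refl.
    + destruct (classic (E u v)) as [a|a].
      * rewrite push_adj in h; auto. destruct (IH h) as [s1 [r1 e1]].
        exists (L u g :: s1). split.
        -- eapply rt_trans. apply red_cons; eauto. apply rt_step. apply st_swap; auto.
        -- simpl. rewrite e1. apply push_comm; auto.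
      * rewrite push_nadj in h; auto. discriminate.
Qed.

Lemma heap_empty s : heap s = empty -> s = [].
Proof.
  destruct s as [|[v g] s]; auto. simpl. intro h.
  assert (h' := f_equal (fun x => x v) h). simpl in h'. rewrite push_v in h'. discriminate.
Qed.

Lemma track v g s : exists s', act v g (heap s) = heap s' /\ red E (L v g :: s) s'.
Proof.
  destruct (emi (g = gone)) as [eg|ng].
  - subst. exists s. split. unfold act. destruct (emi (@gone (G v) = gone)); tauto.
    apply rt_step, st_del.
  - destruct (heap s v) as [|[k|] rest] eqn:eh.
    + exists (L v g :: s). split; [|apply rt_refl].
      unfold act. destruct (emi (g = gone)); [tauto|]. rewrite eh. reflexivity.
    + destruct (@heap_L s v k rest eh) as [s0 [r0 e0]]. rewrite e0, act_push.
      destruct (emi (g = gone)); [tauto|].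
      assert (r1 : red E (L v g :: s) (L v (gmul g k) :: s0)).
      { eapply rt_trans. apply red_cons; eauto. apply rt_step, st_merge. }
      destruct (emi (gmul g k = gone)) as [e|n0].
      * exists s0. split; auto. eapply rt_trans; eauto. rewrite e. apply rt_step, st_del.
      * exists (L v (gmul g k) :: s0). split; auto.
    + exists (L v g :: s). split; [|apply rt_refl].
      unfold act. destruct (emi (g = gone)); [tauto|]. rewrite eh. reflexivity.
Qed.

Definition act_word (w : word G) (x : state) : state :=
  fold_right (fun a y => act (projT1 a) (projT2 a) y) x w.

Lemma act_word_red w : exists s', act_word w empty = heap s' /\ red E w s'.
Proof.
  induction w as [|[v g] w [s1 [e1 r1]]]; simpl.
  - exists []; split; auto. apply rt_refl.
  - rewrite e1. destruct (track v g s1) as [s' [e' r']]. exists s'; split; auto.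
    eapply rt_trans; eauto. apply red_cons; auto.
Qed.

Definition noconsec {A} (l : list (option A)) := forall a b l1 l2, l <> l1 ++ Some a :: Some b :: l2.
Definition Inv (x : state) :=
  (exists s, x = heap s) /\ (forall w, noconsec (x w)) /\ (forall w a, In (Some a) (x w) -> a <> gone).

Lemma noconsec_tail {A} (t : option A) l : noconsec (t :: l) -> noconsec l.
Proof. intros h a b l1 l2 e. apply (h a b (t :: l1) l2). rewrite e; reflexivity. Qed.
Lemma noconsec_None {A} (l : list (option A)) : noconsec l -> noconsec (None :: l).
Proof.
  intros h a b l1 l2 e. destruct l1; simpl in e; injection e; intros; try discriminate.
  eapply h; eauto.
Qed.
Lemma noconsec_Some {A} (c : A) (l : list (option A)) :
  noconsec l -> (forall k rest, l <> Some k :: rest) -> noconsec (Some c :: l).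
Proof.
  intros h h' a b l1 l2 e. destruct l1; simpl in e; injection e; intros; subst.
  - eapply h'; eauto.
  - eapply h; eauto.
Qed.

Lemma push_cases v c y w : push v c y w = y w \/ exists t, push v c y w = t :: y w.
Proof.
  unfold push. destruct (emi (v = w)); eauto. destruct (emi (E v w)); eauto.
Qed.

Lemma Inv_S v c y : Inv y -> NT v y -> Inv (S v c y).
Proof.
  intros [[s hs] [h2 h3]] nt. unfold S. destruct (emi (c = gone)) as [ec|nc].
  - split; [|split]; eauto.
  - split; [|split].
    + exists (L v c :: s). simpl. rewrite hs. reflexivity.
    + intro w. unfold push. destruct (emi (v = w)) as [e|n].
      * subst w. simpl. apply noconsec_Some; auto.
      * destruct (emi (E v w)); auto. apply noconsec_None; auto.
    + intros w a. unfold push. destruct (emi (v = w)) as [e|n].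
      * subst w. simpl. intros [ea|ia]; [|eapply h3; eauto].
        injection ea; intros; subst; auto.
      * destruct (emi (E v w)); [eapply h3; eauto|]. intros [ea|ia]; [discriminate|eapply h3; eauto].
Qed.

Lemma decomp v x : Inv x -> exists c y, Inv y /\ NT v y /\ x = S v c y.
Proof.
  intros hx. pose proof hx as [[s hs] [h2 h3]].
  destruct (x v) as [|[k|] rest] eqn:ex.
  - exists gone, x. split; auto. split. intros k r; congruence.
    unfold S; destruct (emi (@gone (G v) = gone)); tauto.
  - assert (ek : heap s v = Some k :: rest) by (rewrite <- hs; auto).
    destruct (@heap_L s v k rest ek) as [s0 [_ e0]].
    assert (kn : k <> gone). { apply (h3 v). rewrite ex; left; auto. }
    exists k, (heap s0). rewrite <- hs in e0.
    assert (yv : heap s0 v = rest). { rewrite e0, push_v in ex. injection ex; auto. }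
    split; [|split].
    + split; [eauto|split].
      * intro w. destruct (push_cases v k (heap s0) w) as [e|[t e]]; rewrite <- e0 in e.
        -- rewrite <- e; auto.
        -- apply noconsec_tail with t. rewrite <- e; auto.
      * intros w a ia. apply (h3 w). destruct (push_cases v k (heap s0) w) as [e|[t e]];
          rewrite <- e0 in e; rewrite e; simpl; auto.
    + intros k' r' e. rewrite yv in e. subst rest.
      apply (h2 v k k' [] r'). rewrite ex, e; reflexivity.
    + rewrite e0. unfold S. destruct (emi (k = gone)); tauto.
  - exists gone, x. split; auto. split. intros k r; congruence.
    unfold S; destruct (emi (@gone (G v) = gone)); tauto.
Qed.

Lemma act_Inv v g x : Inv x -> Inv (act v g x).
Proof.
  intro hx. destruct (decomp v hx) as [c [y [hy [nt e]]]]. subst x.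
  rewrite act_S; auto. apply Inv_S; auto.
Qed.

Lemma act_mul v g h x : Inv x -> act v (gmul g h) x = act v g (act v h x).
Proof.
  intro hx. destruct (decomp v hx) as [c [y [hy [nt e]]]]. subst x.
  rewrite !act_S, gmulA; auto.
Qed.

Lemma act_one v x : act v gone x = x.
Proof. unfold act. destruct (emi (@gone (G v) = gone)); tauto. Qed.

Lemma act_comm u v (g : G u) (h : G v) x : E u v -> Inv x ->
  act u g (act v h x) = act v h (act u g x).
Proof.
  intros huv hx. destruct (decomp v hx) as [c [y [hy [nty e]]]]. subst x.
  destruct (decomp u hy) as [d [z [hz [ntz e]]]]. subst y.
  assert (ntvz : NT v z).
  { intros k r ez. apply (nty k r). unfold S. destruct (emi (d = gone)); auto.
    rewrite push_adj; auto. }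
  rewrite (act_S h c nty).
  rewrite <- (S_comm d (gmul h c) z huv).
  rewrite (act_S g d (NT_S (gmul h c) (Esym huv) ntz)).
  rewrite <- (S_comm d c z huv).
  rewrite (act_S g d (NT_S c (Esym huv) ntz)).
  rewrite (S_comm (gmul g d) c z huv).
  rewrite (act_S h c (NT_S (gmul g d) huv ntvz)).
  apply S_comm; auto.
Qed.

Definition X := {x : state | Inv x}.
Definition PermC := {p : (X -> X) * (X -> X) |
  (forall x, snd p (fst p x) = x) /\ (forall x, fst p (snd p x) = x)}.

Lemma perm_ext (p q : PermC) : (forall x, fst (proj1_sig p) x = fst (proj1_sig q) x) -> p = q.
Proof.
  destruct p as [[p1 p2] [hp1 hp2]], q as [[q1 q2] [hq1 hq2]]; simpl in *. intro h.
  assert (e1 : p1 = q1) by (extensionality x; auto). subst q1.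
  assert (e2 : p2 = q2).
  { extensionality x. rewrite <- (hq2 x) at 1. rewrite hp1. reflexivity. }
  subst q2. f_equal. apply proof_irrelevance.
Qed.

Definition P_mul (p q : PermC) : PermC.
Proof.
  exists (fun x => fst (proj1_sig p) (fst (proj1_sig q) x), fun x => snd (proj1_sig q) (snd (proj1_sig p) x)).
  destruct p as [[p1 p2] [hp1 hp2]], q as [[q1 q2] [hq1 hq2]]; simpl. split; intro x. rewrite hp1, hq1; auto. rewrite hq2, hp2; auto.
Defined.
Definition P_one : PermC.
Proof. exists (fun x => x, fun x => x). simpl; split; auto. Defined.
Definition P_inv (p : PermC) : PermC.
Proof. exists (snd (proj1_sig p), fst (proj1_sig p)). destruct p as [pp [h1 h2]]; simpl; auto. Defined.

Definition PermGrp : Grp.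
Proof.
  refine (@MkGrp PermC P_mul P_one P_inv _ _ _ _ _); intros; apply perm_ext; intros;
  simpl; auto.
  - destruct x as [pp [h1 h2]]; simpl; auto.
  - destruct x as [pp [h1 h2]]; simpl; auto.
Defined.

Definition actX v (g : G v) (x : X) : X := exist _ (act v g (proj1_sig x)) (act_Inv v g (proj2_sig x)).

Definition fv (v : V) (g : G v) : PermGrp.
Proof.
  exists (actX v g, actX v (ginv g)). simpl. split; intro x; apply sig_eq; simpl.
  - rewrite <- act_mul, gmulVl, act_one; auto. exact (proj2_sig x).
  - rewrite <- act_mul, gmulVr, act_one; auto. exact (proj2_sig x).
Defined.

Lemma fv_hom v : is_hom (fv v).
Proof.
  intros g h. apply perm_ext. intro x. simpl. apply sig_eq; simpl. apply act_mul. exact (proj2_sig x).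
Qed.
Lemma fv_comm : commuting E fv.
Proof.
  intros u v g h huv. apply perm_ext. intro x. simpl. apply sig_eq; simpl. apply act_comm; auto.
  exact (proj2_sig x).
Qed.

Lemma Inv_empty : Inv empty.
Proof.
  split; [|split]. exists []; reflexivity. intros w a b l1 l2 e. destruct l1; discriminate.
  intros w a [].
Qed.

Theorem HT (M : Grp) (iota : forall v, G v -> M) : is_graph_product E G M iota ->
  forall w, eval iota w = gone -> red E w [].
Proof.
  intros hGP w ew. destruct hGP as [hh [hc U]].
  destruct (U PermGrp fv fv_hom fv_comm) as [[h [hom hi]] _].
  assert (key : forall w (x : X), proj1_sig (fst (proj1_sig (h (eval iota w))) x) = act_word w (proj1_sig x)).
  { induction w0 as [|[v g] w0 IH]; intro x; simpl.
    - rewrite (hom_one hom). reflexivity.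
    - rewrite hom, hi. simpl. rewrite IH. reflexivity. }
  assert (k := key w (exist _ empty Inv_empty)). rewrite ew, (hom_one hom) in k. simpl in k.
  destruct (act_word_red w) as [s' [e r]]. rewrite <- k in e.
  symmetry in e. apply heap_empty in e. subst; auto.
Qed.
End Heap.


Fixpoint enum {A} (l : list A) : list {x | In x l} :=
  match l with
  | [] => []
  | a :: l' => exist _ a (in_eq a l') ::
      map (fun s => exist (fun x => In x (a :: l')) (proj1_sig s) (in_cons a _ _ (proj2_sig s))) (enum l')
  end.
Lemma enum_all {A} (l : list A) : forall s, In s (enum l).
Proof.
  induction l as [|a l IH]; intros [x hx]; simpl in *. destruct hx.
  destruct hx as [e|h].
  - subst. left. f_equal. apply proof_irrelevance.
  - right. apply in_map_iff. exists (exist _ x h). split; auto. simpl. f_equal. apply proof_irrelevance.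
Qed.

Definition Triv : Grp := prodGrp (fun e : Empty_set => match e return Grp with end).

Section Extract.
Variables (V : Type) (G : V -> Grp).
Definition castv {v w : V} (e : v = w) (g : G v) : G w := eq_rect v (fun z => carrier (G z)) g w e.
Definition lv (v : V) (l : word G) : list (G v) :=
  flat_map (fun a => match emi (projT1 a = v) with left e => [castv e (projT2 a)] | right _ => [] end) l.
Lemma lv_in v g l : In (existT _ v g) l -> In g (lv v l).
Proof.
  intro h. apply in_flat_map. exists (existT _ v g). split; auto. simpl.
  destruct (emi (v = v)) as [e|n]; [|congruence]. rewrite (proof_irrelevance _ e eq_refl). left; auto.
Qed.
End Extract.

Lemma len_flat (A : Type) (f : list A -> list A) (ws : list (list A)) w :
  In w ws -> length (f w) <= length (flat_map f ws).
Proof.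
  induction ws as [|w0 ws IH]; simpl; [intros []|]. intros [e|h].
  - subst; rewrite length_app; lia.
  - rewrite length_app. specialize (IH h); lia.
Qed.

Lemma in_winv V (G : V -> Grp) (w : word G) a : In a w -> In (linv a) (winv w).
Proof. intro h. unfold winv. apply in_rev. rewrite rev_involutive. apply in_map; auto. Qed.

Lemma length_winv V (G : V -> Grp) (w : word G) : length (winv w) = length w.
Proof. unfold winv. rewrite length_rev, length_map; auto. Qed.

Lemma resid_of_C (C : GroupClass) (H : Grp) : C H -> residually C H.
Proof.
  intros hc g hg. exists H, (fun x => x). split; auto. split. intros x y; auto.
  split; auto. intro h; exists h; auto.
Qed.

Theorem theoremB (C : GroupClass) :
  closed_subgroups C ->
  closed_finite_products C ->
  graph_products_preserve (residually C) ->
  graph_products_preserve (LE C).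
Proof.
  intros hsub hprod hres V E G P iota hsimp hGP hLE K.
  pose proof hsimp as [Esym Eirr].
  set (wd := fun p : P => proj1_sig (constructive_indefinite_description _ (generation hGP p))).
  assert (wd_spec : forall p, eval iota (wd p) = p).
  { intro p. unfold wd. destruct (constructive_indefinite_description _ _); auto. }
  set (wds := map wd K ++ flat_map (fun k1 => map (fun k2 => wd (gmul k1 k2)) K) K).
  set (Lall := flat_map (fun w => w ++ winv w) wds).
  set (n0 := 3 * length Lall).
  set (N := 2 ^ (Datatypes.S n0)).
  set (A := fun v => lv v Lall).
  assert (ch : forall v, {H : Grp & {f : G v -> H | C H /\ almost_hom (pl (A v) N) f}}).
  { intro v. destruct (constructive_indefinite_description _ (hLE v (pl (A v) N))) as [H hH].
    exists H. apply constructive_indefinite_description. exact hH. }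
  set (Cv := fun v => projT1 (ch v)).
  set (phi := fun v => proj1_sig (projT2 (ch v)) : G v -> Cv v).
  assert (hC : forall v, C (Cv v)) by (intro v; exact (proj1 (proj2_sig (projT2 (ch v))))).
  assert (hah : forall v, almost_hom (pl (A v) N) (phi v)) by (intro v; exact (proj2 (proj2_sig (projT2 (ch v))))).
  assert (phi_mul : forall v x y, In x (pl (A v) N) -> In y (pl (A v) N) ->
     phi v (gmul x y) = gmul (phi v x) (phi v y)) by (intros; apply (proj1 (hah v)); auto).
  assert (phi_inj : forall v x y, In x (pl (A v) N) -> In y (pl (A v) N) -> phi v x = phi v y -> x = y)
    by (intros; apply (proj2 (hah v)); auto).
  set (Q := QGrp E Cv). set (iQ := iotaQ E Cv).
  assert (hQ : is_graph_product E Cv Q iQ) by apply QGP.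
  assert (Qres : residually C Q).
  { apply (hres V E Cv Q iQ hsimp hQ). intro v; apply resid_of_C; auto. }
  set (ev := fun w : word G => eval iQ (Psi Cv phi w)).
  assert (hJ : forall w, (forall a, In a w -> In a Lall) -> length w <= n0 -> J A n0 w).
  { intros w hw hl. split; auto. intros [v g] ha. simpl.
    apply (pl_mono _ (m := 1)). pose proof (Nat.pow_nonzero 2 (n0 - length w)); lia.
    apply pl_A. unfold A. apply lv_in. apply hw; auto. }
  assert (F1 : forall w, (forall a, In a w -> In a Lall) -> length w <= n0 ->
             eval iota w = gone -> ev w = gone).
  { intros w hw hl e. apply (HT Esym Eirr hGP) in e.
    assert (r := sim_fwd (E:=E) Cv phi phi_mul (le_n _) e (hJ w hw hl)).
    unfold ev. transitivity (eval iQ (Psi Cv phi [])); [|reflexivity].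
    apply (eval_red (proj1 hQ) (proj1 (proj2 hQ)) r). }
  assert (F2 : forall w, (forall a, In a w -> In a Lall) -> length w <= n0 ->
             ev w = gone -> eval iota w = gone).
  { intros w hw hl e. apply (HT Esym Eirr hQ) in e.
    assert (r := sim_bwd (E:=E) phi phi_mul phi_inj (le_n _) e (hJ w hw hl)).
    transitivity (eval iota (@nil (letter G))); [|reflexivity].
    apply (eval_red (proj1 hGP) (proj1 (proj2 hGP)) r). }
  assert (Lw : forall p, In (wd p) wds -> (forall a, In a (wd p) -> In a Lall) /\
            (forall a, In a (winv (wd p)) -> In a Lall) /\ length (wd p) <= length Lall).
  { intros p hp. split; [|split].
    - intros a ha. unfold Lall. apply in_flat_map. exists (wd p); split; auto. apply in_or_app; auto.
    - intros a ha. unfold Lall. apply in_flat_map. exists (wd p); split; auto. apply in_or_app; auto.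
    - pose proof (len_flat (fun w => w ++ winv w) wds _ hp) as hl. simpl in hl.
      rewrite length_app in hl. fold Lall in hl. lia. }
  assert (hK1 : forall k, In k K -> In (wd k) wds).
  { intros k hk. apply in_or_app; left. apply in_map; auto. }
  assert (hK2 : forall k1 k2, In k1 K -> In k2 K -> In (wd (gmul k1 k2)) wds).
  { intros k1 k2 h1 h2. apply in_or_app; right. apply in_flat_map. exists k1; split; auto.
    apply in_map_iff; exists k2; auto. }
  assert (inA : forall v g, In (existT _ v g) Lall -> In g (pl (A v) N)).
  { intros v g h. apply (pl_mono _ (m := 1)). unfold N. pose proof (Nat.pow_nonzero 2 (Datatypes.S n0)); lia.
    apply pl_A. apply lv_in; auto. }
  assert (evinv : forall p, In (wd p) wds -> ev (winv (wd p)) = ginv (ev (wd p))).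
  { intros p hp. destruct (Lw p hp) as [h1 [h2 _]]. unfold ev. rewrite Psi_winv.
    - apply eval_winv. exact (proj1 hQ).
    - intros [v g] ha. simpl. apply (phi_inv G Cv phi A N phi_mul).
      + apply inA. apply h1; auto.
      + apply inA. apply h2. apply (in_winv (wd p) _ ha). }
  assert (evapp : forall w1 w2, ev (w1 ++ w2) = gmul (ev w1) (ev w2)).
  { intros w1 w2. unfold ev, Psi. rewrite map_app. apply eval_app. }
  set (Z0 := flat_map (fun k1 => map (fun k2 => gmul (ginv (ev (wd k1))) (ev (wd k2))) K) K).
  set (I := {z : Q | In z Z0}).
  assert (choose : forall i : I, {H : Grp & {f : Q -> H | C H /\ is_hom f /\
                     (proj1_sig i <> gone -> f (proj1_sig i) <> gone)}}).
  { intro i. destruct (emi (proj1_sig i = gone)) as [e|n].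
    - exists Triv. exists (fun _ => gone). split; [|split].
      + apply hprod. exists []. intros [].
        intros [].
      + intros x y. symmetry; apply gmul1l.
      + tauto.
    - destruct (constructive_indefinite_description _ (Qres _ n)) as [H hH]. exists H.
      destruct (constructive_indefinite_description _ hH) as [f hf]. exists f. tauto. }
  set (Hs := fun i => projT1 (choose i)).
  set (pis := fun i => proj1_sig (projT2 (choose i)) : Q -> Hs i).
  set (Hprod := prodGrp Hs).
  set (pi := fun q : Q => (fun i => pis i q) : Hprod).
  assert (hpi : is_hom pi).
  { intros x y. unfold pi. extensionality i. simpl. unfold prod_mul.
    exact (proj1 (proj2 (proj2_sig (projT2 (choose i)))) x y). }
  assert (hCprod : C Hprod).
  { apply hprod.
    - exists (enum Z0). apply enum_all.
    - intro i. exact (proj1 (proj2_sig (projT2 (choose i)))). }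
  exists Hprod, (fun p => pi (ev (wd p))). split; auto. split.
  - intros k1 k2 h1 h2.
    set (r := winv (wd (gmul k1 k2)) ++ (wd k1 ++ wd k2)).
    destruct (Lw _ (hK2 _ _ h1 h2)) as [a1 [a2 a3]].
    destruct (Lw _ (hK1 _ h1)) as [b1 [b2 b3]].
    destruct (Lw _ (hK1 _ h2)) as [c1 [c2 c3]].
    assert (e := F1 r).
    unfold r in e. rewrite !evapp, evinv in e by auto.
    rewrite !eval_app, (eval_winv _ (proj1 hGP)), !wd_spec in e.
    assert (e' : gmul (ginv (ev (wd (gmul k1 k2)))) (gmul (ev (wd k1)) (ev (wd k2))) = gone).
    { apply e.
      - intros a ha. repeat (apply in_app_or in ha as [ha|ha]); auto.
      - rewrite !length_app, length_winv. unfold n0. lia.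
      - rewrite gmulVl. reflexivity. }
    apply mul_inv_eq1 in e'. rewrite e'. apply hpi.
  - intros k1 k2 h1 h2 e.
    set (z := gmul (ginv (ev (wd k1))) (ev (wd k2))).
    assert (hz : In z Z0).
    { apply in_flat_map. exists k1; split; auto. apply in_map_iff; exists k2; auto. }
    assert (z0 : z = gone).
    { destruct (classic (z = gone)) as [ez|nz]; auto. exfalso.
      set (i := exist _ z hz : I).
      apply (proj2 (proj2 (proj2_sig (projT2 (choose i)))) nz).
      assert (pz : pi z = gone).
      { unfold z. rewrite hpi, (hom_inv hpi), e. apply gmulVl. }
      exact (f_equal (fun F => F i) pz). }
    destruct (Lw _ (hK1 _ h1)) as [b1 [b2 b3]].
    destruct (Lw _ (hK1 _ h2)) as [c1 [c2 c3]].
    assert (ed : eval iota (winv (wd k1) ++ wd k2) = gone).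
    { apply F2.
      - intros a ha. apply in_app_or in ha as [ha|ha]; auto.
      - rewrite length_app, length_winv. unfold n0. lia.
      - rewrite evapp, evinv; auto. }
    rewrite eval_app, (eval_winv _ (proj1 hGP)), !wd_spec in ed.
    apply mul_inv_eq1; auto.
Qed.
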